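(* Let $p\geq 5$ be an integer and $s=\frac1p$. Let $n\geq 1$ be an integer. Then there is no integer strictly between $-2\left(n-\frac12+\frac{1}{2^{p+1}}\right)^s$ and $-2\left(n-\frac12\right)^s$. *)

(* Defs.v *)
From Stdlib Require Export Reals ZArith.

(* Main.v *)
Require Import Defs.
From Stdlib Require Import Reals ZArith Lra Lia.
Open Scope R_scope.

Lemma pow_strict (x y : R) (k : nat) : 0 < x < y -> (x ^ S k < y ^ S k)%R.
Proof.
  intros [h1 h2]. induction k as [|k IH]; simpl in *; [lra|].
  assert (0 < x ^ S k) by (apply pow_lt; lra). simpl in H.
  apply Rlt_trans with (y * (x * x ^ k)).
  - apply Rmult_lt_compat_r; lra.
  - apply Rmult_lt_compat_l; lra.
Qed.

Lemma rp_pow (x : R) (p : nat) : 0 < x -> (1 <= p)%nat ->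
  (Rpower x (1 / INR p)) ^ p = x.
Proof.
  intros hx hp.
  assert (0 < INR p) by (apply lt_0_INR; lia).
  rewrite <- Rpower_pow by apply exp_pos.
  rewrite Rpower_mult.
  replace (1 / INR p * INR p) with 1 by (field; lra).
  apply Rpower_1; auto.
Qed.

Theorem lemma3p2 (p n : nat) (hp : (5 <= p)%nat) (hn : (1 <= n)%nat) :
  ~ (exists k : Z,
       -2 * Rpower (INR n - 1/2 + 1 / 2 ^ (p + 1)) (1 / INR p) < IZR k /\
       IZR k < -2 * Rpower (INR n - 1/2) (1 / INR p)).
Proof.
  intros [k [h1 h2]].
  assert (hn' : 1 <= INR n) by (apply (le_INR 1); lia).
  assert (he : 0 < 1 / 2 ^ (p + 1)) by (apply Rdiv_lt_0_compat; [lra | apply pow_lt; lra]).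
  set (a := INR n - 1/2) in *.
  set (r1 := Rpower a (1 / INR p)) in *.
  set (r2 := Rpower (a + 1 / 2 ^ (p + 1)) (1 / INR p)) in *.
  assert (0 < r1) by apply exp_pos.
  destruct p as [|q]; [lia|].
  assert (A1 : (2 * r1) ^ S q < IZR (- k) ^ S q) by (apply pow_strict; rewrite opp_IZR; lra).
  assert (A2 : IZR (- k) ^ S q < (2 * r2) ^ S q) by (apply pow_strict; rewrite opp_IZR; lra).
  rewrite Rpow_mult_distr in A1, A2.
  unfold r1 in A1; unfold r2 in A2.
  rewrite rp_pow in A1 by (unfold a; lra || lia).
  rewrite rp_pow in A2 by (unfold a; lra || lia).
  rewrite (pow_IZR (- k)) in A1, A2.
  assert (E : 2 ^ S q * a = IZR (2 ^ Z.of_nat (S q) * Z.of_nat n - 2 ^ Z.of_nat q)).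
  { rewrite minus_IZR, mult_IZR, <- !pow_IZR, <- INR_IZR_INZ. unfold a. simpl. field. }
  assert (E2 : 2 ^ S q * (a + 1 / 2 ^ (S q + 1)) = 2 ^ S q * a + 1/2).
  { rewrite pow_add. field. apply pow_nonzero; lra. }
  rewrite E2, E in A2. rewrite E in A1.
  apply lt_IZR in A1.
  assert (A3 : IZR ((- k) ^ Z.of_nat (S q)) < IZR (2 ^ Z.of_nat (S q) * Z.of_nat n - 2 ^ Z.of_nat q + 1)) by (rewrite plus_IZR; lra).
  apply lt_IZR in A3. lia.
Qed.
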